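(* Let $m \ge 3$ and $l_1\le\cdots\le l_m$ be natural numbers. Then $(B(l_1,\ldots,l_m))^2$ is equitably $k$-choosable for every $k \geq m+1$.
   Context: All graphs are finite and simple. For $m,l_1,\ldots,l_m\in\mathbb{N}$ with $l_1\le\cdots\le l_m$, $B(l_1,\ldots,l_m)$ is the graph with vertex set $\{u\}\cup\{v_{i,j}: i\in[m], j\in[l_i]\}$ in which, for each $i\in[m]$, consecutive vertices in the sequence $u, v_{i,1},\ldots,v_{i,l_i}$ are adjacent (and there are no other edges); i.e., a subdivision of $K_{1,m}$ with paths of lengths $l_1,\ldots,l_m$. For a graph $H$, $H^2$ has vertex set $V(H)$ with two vertices adjacent iff their distance in $H$ is 1 or 2. A $k$-assignment $L$ for a graph $G$ assigns to each vertex $v$ a set $L(v)$ of exactly $k$ colors. An equitable $L$-coloring of $G$ is a proper coloring $f$ with $f(v)\in L(v)$ for all $v$ such that no color is used on more than $\lceil |V(G)|/k\rceil$ vertices. $G$ is equitably $k$-choosable if it has an equitable $L$-coloring for every $k$-assignment $L$. *)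

(* Defs.v *)
From mathcomp Require Import all_boot.
Set Implicit Arguments. Unset Strict Implicit. Unset Printing Implicit Defensive.

(* Vertices of the spider B(l_1,...,l_m): None is the centre u, and
   Some (Tagged i j) (with j : 'I_(l i)) is v_{i, j+1}. *)
Definition spider_vertex (m : nat) (l : 'I_m -> nat) : finType :=
  option {i : 'I_m & 'I_(l i)}.

Definition spider_edge1 (m : nat) (l : 'I_m -> nat)
  (x y : spider_vertex l) : bool :=
  match x, y with
  | None, Some p => val (tagged p) == 0
  | Some p, Some q => (tag p == tag q) && ((val (tagged p)).+1 == val (tagged q))
  | _, _ => false
  end.

Definition spider_edge (m : nat) (l : 'I_m -> nat) : rel (spider_vertex l) :=
  fun x y => spider_edge1 x y || spider_edge1 y x.

Arguments spider_edge : clear implicits.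
Arguments spider_edge m l x y : clear implicits.

Definition graph_square (V : finType) (e : rel V) : rel V :=
  fun x y => (x != y) && (e x y || [exists z, e x z && e z y]).

Definition ceil_div (n k : nat) : nat := (n + k.-1) %/ k.

Definition k_assignment (V : finType) (k : nat) (L : V -> seq nat) : Prop :=
  forall v, uniq (L v) /\ size (L v) = k.

Definition equitable_L_coloring (V : finType) (e : rel V) (k : nat)
  (L : V -> seq nat) (f : V -> nat) : Prop :=
  [/\ (forall x y, e x y -> f x <> f y),
      (forall v, f v \in L v) &
      (forall c, #|[set v | f v == c]| <= ceil_div #|V| k)].

Definition equitably_k_choosable (V : finType) (e : rel V) (k : nat) : Prop :=
  forall L : V -> seq nat, k_assignment k L ->
    exists f : V -> nat, equitable_L_coloring e k L f.

(* Main.v *)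
Require Import Defs.
From mathcomp Require Import all_boot zify.
Set Implicit Arguments. Unset Strict Implicit. Unset Printing Implicit Defensive.

Lemma card_sub_seq (V : finType) (g : V -> nat) (A : {set V}) (S : seq nat) :
  injective g -> (forall y, y \in A -> g y \in S) -> #|A| <= size S.
Proof.
move=> ginj HS.
have -> : #|A| = size (map g (enum A)) by rewrite size_map cardE.
apply: uniq_leq_size; first by rewrite (map_inj_uniq ginj) enum_uniq.
by move=> q /mapP [y]; rewrite mem_enum => yA ->; apply: HS.
Qed.

Lemma avoid_color (s t : seq nat) : uniq s -> size t < size s ->
  exists c, (c \in s) && (c \notin t).
Proof.
move=> us lt.
have [c cs ct] : exists2 c, c \in s & c \notin t.
  apply/allPn; apply/negP => /allP H.
  move: (uniq_leq_size us H); rewrite leqNgt lt.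
  done.
exists c; by rewrite cs ct.
Qed.

Section Greedy.
Variables (V : finType) (e : rel V) (k : nat) (key blk : V -> nat) (t : nat).
Hypotheses (esym : forall x y, e x y -> e y x) (eirr : forall x, ~~ e x x)
  (keyinj : injective key) (blkt : forall x, blk x < t)
  (tle : t <= ceil_div #|V| k).

Definition forb (x : V) : {set V} :=
  [set y | (key y < key x) && ((blk y == blk x) || e x y)].

Hypothesis forbk : forall x, #|forb x| < k.

Variable L : V -> seq nat.
Hypothesis HL : k_assignment k L.

Definition good_upto (N : nat) (f : V -> nat) :=
  forall x, key x < N -> f x \in L x /\
    forall y, y \in forb x -> f x != f y.

Lemma good_exists N : exists f, good_upto N f.
Proof.
elim: N => [|N [f Hf]].
  by exists (fun _ => 0) => x.
case: (pickP (fun x => key x == N)) => [x /eqP kx|none]; last first.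
  exists f => z kz. apply: Hf.
  have := none z. move=> /= /negbT. lia.
have [us sz] := HL x.
have szF : size [seq f y | y <- enum (forb x)] < size (L x).
  by rewrite size_map -cardE sz; exact: forbk.
have [c /andP [cL cF]] := avoid_color us szF.
exists (fun z => if z == x then c else f z) => z kz.
have ne : forall y, key y < N -> (y == x) = false.
  by move=> y ky; apply/eqP => E; move: ky; rewrite E kx ltnn.
case: (eqVneq z x) => [->|zx].
  split=> // y yF.
  have ky : key y < N by move: yF; rewrite inE kx => /andP [].
  rewrite ne //. apply: contraNneq cF => ->.
  by apply: map_f; rewrite mem_enum.
have kz' : key z < N.
  have : key z != key x by apply: contraNneq zx => /keyinj ->.
  rewrite kx. lia.
have [Hz1 Hz2] := Hf z kz'.
split=> // y yF.
have ky : key y < N by move: yF; rewrite inE => /andP [] ?; lia.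
by rewrite ne //; apply: Hz2.
Qed.

Lemma greedy_col : exists f, equitable_L_coloring e k L f.
Proof.
have [f Hf] := good_exists (\max_(x : V) key x).+1.
have G x : f x \in L x /\ forall y, y \in forb x -> f x != f y.
  by apply: Hf; rewrite ltnS; apply: leq_bigmax.
exists f; split.
- move=> x y exy.
  have xy : x != y by apply: contraTneq exy => ->; apply: eirr.
  have : key x != key y by apply: contraNneq xy => /keyinj ->.
  rewrite neq_ltn => /orP [lt|lt].
  + apply/eqP; rewrite eq_sym; apply: (G y).2; rewrite inE lt /=.
    by rewrite esym // orbT.
  + by apply/eqP; apply: (G x).2; rewrite inE lt /= exy orbT.
- by move=> v; case: (G v).
- move=> c.
  pose b (v : V) : 'I_t := Ordinal (blkt v).
  rewrite -(@card_in_imset _ _ b); last first.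
    move=> x y; rewrite !inE => /eqP fx /eqP fy /(congr1 val) /= bxy.
    apply: keyinj; apply/eqP; apply: contraT => kne.
    move: kne; rewrite neq_ltn => /orP [lt|lt].
    - have := (G y).2 x; rewrite inE lt bxy eqxx /= fx fy eqxx => /(_ isT). done.
    - have := (G x).2 y; rewrite inE lt bxy eqxx /= fx fy eqxx => /(_ isT). done.
  apply: leq_trans (max_card _) _. by rewrite card_ord.
Qed.

End Greedy.

Lemma greedy (V : finType) (e : rel V) (k : nat) (key blk : V -> nat) (t : nat) :
  (forall x y, e x y -> e y x) -> (forall x, ~~ e x x) ->
  injective key -> (forall x, blk x < t) -> t <= ceil_div #|V| k ->
  (forall x, #|[set y | (key y < key x) && ((blk y == blk x) || e x y)]| < k) ->
  equitably_k_choosable e k.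
Proof.
move=> es ei ki bt tl fk L HL.
exact: (@greedy_col V e k key blk t es ei ki bt tl fk L HL).
Qed.

Section Spider.
Variables (m : nat) (l : 'I_m -> nat).
Hypothesis lpos : forall i, 1 <= l i.

Local Notation V := (spider_vertex l).

Definition PS (a : nat) : nat := \sum_(r < m | r < a) l r.
Definition l0 := PS 1.
Definition nn := (PS m).+1.

Definition pos (x : V) : nat :=
  match x with
  | None => l0
  | Some p => if val (tag p) == 0 then l0.-1 - val (tagged p)
              else (PS (tag p)).+1 + val (tagged p)
  end.

Lemma PS_step (i : 'I_m) : PS i.+1 = PS i + l i.
Proof.
rewrite /PS (bigD1 i) //= addnC; congr (_ + _).
by apply: eq_bigl => r; rewrite ltnS -val_eqE /=; case: ltngtP.
Qed.

Lemma PS_mono a b : a <= b -> PS a <= PS b.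
Proof.
move=> ab; rewrite /PS [X in _ <= X]big_mkcond [X in X <= _]big_mkcond.
apply: leq_sum => r _; case: ifP => ra; last by [].
by rewrite (leq_trans ra ab).
Qed.

Lemma PS_ge a : m <= a -> PS a = PS m.
Proof.
move=> ma; rewrite /PS; apply: eq_bigl => r.
by rewrite (leq_trans (ltn_ord r) ma) ltn_ord.
Qed.

Lemma PS_m : PS m = \sum_i l i.
Proof. by rewrite /PS; apply: eq_bigl => r; rewrite ltn_ord. Qed.

Lemma PS0 : PS 0 = 0.
Proof. by rewrite /PS big_pred0. Qed.

Lemma l0_eq (i : 'I_m) : val i = 0 -> l0 = l i.
Proof. by move=> i0; rewrite /l0 -i0 PS_step i0 PS0. Qed.

Lemma card_V : #|{: V}| = nn.
Proof.
rewrite card_option card_tagged /nn PS_m; congr _.+1.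
rewrite sumnE big_map big_enum /=; apply: eq_bigr => i _; exact: card_ord.
Qed.

Lemma PS_short c : (forall r : 'I_m, r < c -> l r <= 2) -> PS c <= 2 * c.
Proof.
elim: c => [|c IH] H; first by rewrite PS0.
case: (ltnP c m) => cm.
  rewrite (PS_step (Ordinal cm)) /=.
  have := IH (fun r rc => H r (ltnW rc)). have := H (Ordinal cm) (ltnSn c). lia.
rewrite PS_ge ?(leq_trans cm) // -(PS_ge cm).
have := IH (fun r rc => H r (ltnW rc)). lia.
Qed.


Lemma l0_le : l0 <= PS m.
Proof. case: (posnP m) => [m0|mp]; [by rewrite /l0 (@PS_ge 1) ?m0 | by apply: PS_mono]. Qed.

Lemma PS_lt_leg (i : 'I_m) (j : 'I_(l i)) : PS i + j < PS i.+1.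
Proof. by rewrite PS_step ltn_add2l. Qed.

Lemma pos_lt x : pos x < nn.
Proof.
rewrite /nn ltnS; case: x => [[i j]|]/=; last exact: l0_le.
case: ifP => _; first by have := l0_le; lia.
have := PS_lt_leg j; have := PS_mono (ltn_ord i); lia.
Qed.

Lemma pos_leg0 (i : 'I_m) (j : 'I_(l i)) : val i = 0 ->
  pos (Some (Tagged (fun i => 'I_(l i)) j)) = l0.-1 - j /\ l0.-1 - j < l0.
Proof.
move=> i0 /=; rewrite i0 eqxx; split=> //.
have := lpos i; rewrite (l0_eq i0); lia.
Qed.

Lemma pos_legS (i : 'I_m) (j : 'I_(l i)) : val i != 0 ->
  pos (Some (Tagged (fun i => 'I_(l i)) j)) = (PS i).+1 + j /\ l0 < (PS i).+1 + j.
Proof.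
move=> i0 /=; rewrite (negPf i0); split=> //.
have i1 : 1 <= i by rewrite lt0n. have := PS_mono i1; rewrite /l0; lia.
Qed.

Lemma pos_None : pos None = l0. Proof. by []. Qed.

Arguments pos : simpl never.

Lemma tagged_eq (i : 'I_m) (j j' : 'I_(l i)) : nat_of_ord j = nat_of_ord j' ->
  Some (Tagged (fun i => 'I_(l i)) j) = Some (Tagged (fun i => 'I_(l i)) j') :> V.
Proof. by move=> /val_inj ->. Qed.

Lemma pos_inj : injective pos.
Proof.
have legS_lt (i i' : 'I_m) (j : 'I_(l i)) (j' : 'I_(l i')) : 0 < i -> i < i' ->
  (PS i).+1 + j < (PS i').+1 + j'.
  move=> _ ii'; have := PS_lt_leg j; have := PS_mono ii'; lia.
move=> [[i j]|] [[i' j']|] //.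
- case: (eqVneq (val i) 0) => i0; case: (eqVneq (val i') 0) => i0'.
  + have ii' : i = i' by apply: val_inj; rewrite i0 i0'.
    subst i'; have [-> h1] := pos_leg0 j i0; have [-> h2] := pos_leg0 j' i0 => E.
    apply: tagged_eq; have := ltn_ord j; have := ltn_ord j'; have := l0_eq i0; lia.
  + have [-> h1] := pos_leg0 j i0; have [-> h2] := pos_legS j' i0'; lia.
  + have [-> h1] := pos_legS j i0; have [-> h2] := pos_leg0 j' i0'; lia.
  + have [-> h1] := pos_legS j i0; have [-> h2] := pos_legS j' i0'.
    case: (ltngtP i i') => ii'.
    * move=> E; have := legS_lt i i' j j' _ ii'; rewrite lt0n i0 => /(_ isT); lia.
    * move=> E; have := legS_lt i' i j' j _ ii'; rewrite lt0n i0' => /(_ isT); lia.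
    * have e : i = i' by apply: val_inj.
      subst i' => E; apply: tagged_eq; lia.
- case: (eqVneq (val i) 0) => i0.
  + have [-> h1] := pos_leg0 j i0; rewrite pos_None; lia.
  + have [-> h1] := pos_legS j i0; rewrite pos_None; lia.
- case: (eqVneq (val i') 0) => i0.
  + have [-> h1] := pos_leg0 j' i0; rewrite pos_None; lia.
  + have [-> h1] := pos_legS j' i0; rewrite pos_None; lia.
Qed.


Definition sqrel (x y : V) : bool :=
  match x, y with
  | None, None => false
  | None, Some q => val (tagged q) <= 1
  | Some p, None => val (tagged p) <= 1
  | Some p, Some q =>
      if tag p == tag q then (val (tagged p) <= (val (tagged q)).+2) &&
                             (val (tagged q) <= (val (tagged p)).+2)
      else (val (tagged p) == 0) && (val (tagged q) == 0)
  end.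

Definition edrel (x y : V) : bool :=
  match x, y with
  | None, None => false
  | None, Some q => val (tagged q) == 0
  | Some p, None => val (tagged p) == 0
  | Some p, Some q =>
      (tag p == tag q) && ((val (tagged p)).+1 == val (tagged q)) ||
      (tag p == tag q) && ((val (tagged q)).+1 == val (tagged p))
  end.

Lemma edge_rel x y : spider_edge m l x y -> edrel x y.
Proof.
by case: x => [[i j]|]; case: y => [[i' j']|];
  rewrite /spider_edge /spider_edge1 /= ?orbF // eq_sym.
Qed.

Ltac crush := repeat (match goal with
  | |- is_true (_ || _) -> _ => case/orP
  | |- is_true (_ && _) -> _ => case/andP
  | |- is_true (@eq_op _ (nat_of_ord _) _) -> _ => move/eqP
  | |- is_true (@eq_op _ (S _) _) -> _ => move/eqP
  | |- is_true (@eq_op _ _ 0) -> _ => move/eqP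
  | |- is_true (_ == _) -> _ => move=> _
  | |- is_true false -> _ => by []
  | |- _ -> _ => intro
  end); try (rewrite /=; lia).

Lemma sq_rel x y : graph_square (spider_edge m l) x y -> sqrel x y.
Proof.
move=> /andP [xy /orP [/edge_rel E | /existsP [z /andP [/edge_rel E1 /edge_rel E2]]]].
- move: xy E; case: x => [[i j]|]; case: y => [[i' j']|] //=.
  + case: (i =P i') => [E|ne]; [subst i' | ]; rewrite /=; crush.
  + crush.
  + crush.
- move: xy E1 E2; case: x => [[i j]|]; case: y => [[i' j']|] //=;
  case: z => [[i'' j'']|] //=; 
  try (case: (i =P i'') => [E|ne]; [subst i'' | ]; rewrite /=);
  try (case: (i' =P i'') => [E|ne]; [subst i'' | ]; rewrite /=);
  try (case: (i =P i') => [E|ne]; [subst i' | ]; rewrite /=);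
  crush.
Qed.


Lemma legS_lt' (i i' : 'I_m) (j : 'I_(l i)) : i < i' -> (PS i).+1 + j < (PS i').+1.
Proof. move=> ii'; have := PS_lt_leg j; have := PS_mono ii'; lia. Qed.

Definition xv1 (x : V) : bool :=
  if x is Some p then (1 < tag p) && (val (tagged p) == 0) else false.
Definition xv2 (x : V) : bool :=
  if x is Some p then (1 < tag p) && (val (tagged p) == 1) else false.

Definition Elist (x : V) : seq nat :=
  if x is Some p then
    (if xv1 x then l0 :: l0.-1 :: [seq (PS r).+1 | r <- iota 1 (tag p).-1]
     else if xv2 x then [:: (pos x).-1; l0] else [:: (pos x).-1; (pos x).-2])
  else [:: (pos x).-1; (pos x).-2].

Lemma adj_E x y : graph_square (spider_edge m l) x y -> pos y < pos x ->
  pos y \in Elist x.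
Proof.
move=> /sq_rel; case: x => [[i j]|]; case: y => [[i' j']|] //=.
- case: (eqVneq (nat_of_ord i) 0) => i0; case: (eqVneq (nat_of_ord i') 0) => i0'.
  + have ii' : i = i' by apply: val_inj; rewrite /= i0 i0'.
    subst i'; rewrite eqxx /=.
    have [-> h1] := pos_leg0 j i0; have [-> h2] := pos_leg0 j' i0.
    have := l0_eq i0; have := ltn_ord j; have := ltn_ord j'.
    rewrite /xv1 /xv2 /= i0 /= !inE => *; apply/orP; lia.
  + have [-> h1] := pos_leg0 j i0; have [-> h2] := pos_legS j' i0'; lia.
  + have [-> h1] := pos_legS j i0; have [-> h2] := pos_leg0 j' i0'.
    case: (i =P i') => [E|ne]; first by exfalso; move/eqP: i0; apply; rewrite E i0'.
    move=> /andP [/eqP j0 /eqP j'0] _.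
    rewrite /xv1 /xv2 /= j0.
    case: (ltnP 1 i) => i1 /=.
    * by rewrite !inE j'0 subn0 eqxx orbT.
    * have i1' : nat_of_ord i = 1 by move: i0; lia.
      have -> : PS i = l0 by rewrite /l0 -i1'.
      by rewrite !inE j'0 subn0 addn0 eqxx orbT.
  + have [-> h1] := pos_legS j i0; have [-> h2] := pos_legS j' i0'.
    case: (i =P i') => [E|ne].
    * subst i' => /andP [a b] lt.
      case: (ltnP 1 i) => i1 /=; case: (eqVneq (nat_of_ord j) 0) => j0 /=;
      case: (eqVneq (nat_of_ord j) 1) => j1 /=; rewrite ?inE; try lia; exfalso; lia.
    * move=> /andP [/eqP j0 /eqP j'0] lt.
      have i'i : i' < i.
        rewrite ltnNge; apply/negP => ii'.
        have ii'' : i < i' by rewrite ltn_neqAle ii' andbT; apply/eqP => E; apply: ne; exact: val_inj.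
        have := legS_lt' j ii''. lia.
      rewrite /xv1 /= j0 eqxx andbT.
      have i1 : 1 < i by move: i0'; lia.
      rewrite i1 !inE j'0 addn0; apply/orP; right; apply/orP; right.
      apply: map_f; rewrite mem_iota; move: i0'; lia.
- case: (eqVneq (nat_of_ord i) 0) => i0.
  + have [-> h1] := pos_leg0 j i0; rewrite pos_None => _ ?; exfalso; lia.
  + have [-> h1] := pos_legS j i0; rewrite pos_None => j1 _.
    case: (ltnP 1 i) => i1 /=.
    * case: (eqVneq (nat_of_ord j) 0) => j0 /=; first by rewrite !inE eqxx.
      have -> : nat_of_ord j == 1 by lia. by rewrite !inE eqxx orbT.
    * have i1' : nat_of_ord i = 1 by move: i0; lia.
      have -> : PS i = l0 by rewrite /l0 -i1'.
      rewrite !inE; lia.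
- case: (eqVneq (nat_of_ord i') 0) => i0.
  + have [-> h1] := pos_leg0 j' i0; rewrite pos_None !inE => ? ?; have := l0_eq i0; lia.
  + have [-> h1] := pos_legS j' i0; rewrite pos_None => ? ?; exfalso; lia.
Qed.


Lemma xv1_inv x : xv1 x -> exists i : 'I_m, [/\ 1 < i, pos x = (PS i).+1 &
  Elist x = l0 :: l0.-1 :: [seq (PS r).+1 | r <- iota 1 i.-1]].
Proof.
case: x => [[i j]|] //= /andP [i1 /eqP j0]; exists i; split=> //.
- have i0 : nat_of_ord i != 0 by move: i1; lia.
  by have [-> _] := pos_legS j i0; rewrite j0 addn0.
- by rewrite /Elist /xv1 /= i1 j0.
Qed.

Lemma xv2_inv x : xv2 x -> exists i : 'I_m, [/\ 1 < i, pos x = (PS i).+2 &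
  Elist x = [:: (pos x).-1; l0]].
Proof.
case: x => [[i j]|] //= /andP [i1 /eqP j0]; exists i; split=> //.
- have i0 : nat_of_ord i != 0 by move: i1; lia.
  by have [-> _] := pos_legS j i0; rewrite j0 addn1.
- by rewrite /Elist /xv1 /xv2 /= i1 j0.
Qed.

Lemma Elist_plain x : ~~ xv1 x -> ~~ xv2 x -> Elist x = [:: (pos x).-1; (pos x).-2].
Proof. by case: x => [[i j]|] //= /negPf a /negPf b; rewrite /Elist a b. Qed.

Lemma Elist_head x : ~~ xv1 x -> exists a, Elist x = [:: (pos x).-1; a].
Proof.
move=> h; case: (boolP (xv2 x)) => h2.
- by have [i [_ _ ->]] := xv2_inv h2; exists l0.
- by rewrite Elist_plain //; eexists.
Qed.

Lemma xv1_XV x : xv1 x -> pos x \in [seq (PS r).+1 | r <- iota 2 (m - 2)].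
Proof.
move=> h; have [i [i1 -> _]] := xv1_inv h.
apply: map_f; rewrite mem_iota; have := ltn_ord i; lia.
Qed.

Lemma size_Elist_xv1 x : xv1 x -> size (Elist x) <= m.
Proof.
move=> h; have [i [i1 _ ->]] := xv1_inv h.
rewrite /= size_map size_iota; have := ltn_ord i; lia.
Qed.


Variable k : nat.
Hypothesis k0 : 0 < k.

Definition blk (x : V) := pos x %/ k.
Definition cls (x : V) := if xv1 x then 0 else if xv2 x || (pos x %% k < 2) then 1 else 2.
Definition key (x : V) := (blk x * 3 + cls x) * nn + pos x.

Lemma cls_le x : cls x <= 2.
Proof. by rewrite /cls; case: ifP => //; case: ifP. Qed.

Lemma key_inj : injective key.
Proof.
move=> x y E; apply: pos_inj.
have := congr1 (modn^~ nn) E; rewrite /key !modnMDl !modn_small //; exact: pos_lt.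
Qed.

Lemma lex_lt a b p q N : p < N -> q < N -> a * N + p < b * N + q ->
  a < b \/ (a = b /\ p < q).
Proof.
move=> pN qN; case: (ltngtP a b) => ab H; first by left.
- exfalso; have : b.+1 * N <= a * N by rewrite leq_mul2r ab orbT.
  rewrite mulSn; lia.
- right; split=> //; move: H; rewrite ab; lia.
Qed.

Lemma key_lt x y : key y < key x ->
  blk y < blk x \/ (blk y = blk x /\ (cls y < cls x \/ (cls y = cls x /\ pos y < pos x))).
Proof.
move=> /(lex_lt (pos_lt y) (pos_lt x)) [H|[H1 H2]].
- have := cls_le x; have := cls_le y; lia.
- have := cls_le x; have := cls_le y; lia.
Qed.

Lemma blk_lt_pos x y : blk y < blk x -> pos y < blk x * k.
Proof. by rewrite /blk ltn_divLR. Qed.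

Lemma blk_range x : blk x * k <= pos x < blk x * k + k.
Proof.
rewrite /blk {2 3}(divn_eq (pos x) k) leq_addr /= ltn_add2l ltn_pmod //.
Qed.

Lemma offset x : pos x = blk x * k + pos x %% k.
Proof. by rewrite /blk {1}(divn_eq (pos x) k). Qed.

Lemma blk_bound x : blk x < ceil_div nn k.
Proof.
rewrite /blk /ceil_div.
have -> : nn + k.-1 = 1 * k + nn.-1 by rewrite /nn; lia.
rewrite divnMDl // add1n ltnS leq_div2r //.
have := pos_lt x; lia.
Qed.


Lemma blk_eq_of x w : blk x * k <= pos w < blk x * k + k -> blk w = blk x.
Proof.
move=> /andP [a b]; rewrite {1}/blk.
have -> : pos w = blk x * k + (pos w - blk x * k) by lia.
rewrite divnMDl // divn_small ?addn0 //; lia.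
Qed.

Lemma key_lt_same x w : blk w = blk x ->
  (cls x < cls w \/ (cls x = cls w /\ pos x < pos w)) -> key x < key w.
Proof.
move=> bw [H|[H1 H2]]; rewrite /key bw.
- have : (blk x * 3 + cls x).+1 * nn <= (blk x * 3 + cls w) * nn.
    by rewrite leq_mul2r; apply/orP; right; lia.
  have := pos_lt x; rewrite mulSn; lia.
- rewrite H1; lia.
Qed.

Definition Ecase :=
  (4 < k /\ forall i j : 'I_m, i <= j -> l i <= l j) \/
  (k = 4 /\ m = 3 /\ (PS 2).+1 %% 4 != 2).

Hypothesis Hcase : Ecase.
Hypothesis km : m < k.
Hypothesis m3 : 3 <= m.

Lemma short_prefix (c : 'I_m) : (forall i j : 'I_m, i <= j -> l i <= l j) ->
  l c <= 2 -> PS c.+1 <= 2 * c.+1.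
Proof.
move=> asc lc; apply: PS_short => r rc.
apply: leq_trans lc; apply: asc; lia.
Qed.

Lemma witness x : xv2 x -> 2 <= pos x %% k -> l0 < blk x * k ->
  blk x * k + k <= nn -> exists w, blk w = blk x /\ key x < key w.
Proof.
case: x => [[c j]|] // /andP [/= c1 /eqP /= j1] off ls sk.
set x := Some _.
have c0 : nat_of_ord c != 0 by move: c1; lia.
have [px _] := pos_legS j c0.
rewrite -/x j1 in px.
have rx := blk_range x.
have ox := offset x.
set s := blk x * k in ls sk rx ox *.
have lc : 2 <= l c by have := ltn_ord j; lia.
have clsx : cls x = 1 by rewrite /cls /xv1 /xv2 /= c1 j1.
have s_ge : k <= s.
  rewrite /s; have : 0 < blk x by move: ls; rewrite /s; case: (blk x) => //=; lia.
  case: (blk x) => // b _; rewrite mulSn; lia.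
case: (ltnP (pos x).+1 (s + k)) => hp1.
- case: (ltnP 2 (l c)) => lc3.
  +
    pose w := Some (Tagged (fun i => 'I_(l i)) (Ordinal lc3)).
    have [pw _] := pos_legS (Ordinal lc3) c0.
    rewrite -/w /= in pw.
    have bw : blk w = blk x by apply: blk_eq_of; rewrite pw -/s; lia.
    exists w; split=> //; apply: key_lt_same => //; left.
    rewrite clsx /cls /xv1 /xv2 /= c1 /=.
    have ow := offset w; rewrite bw -/s in ow.
    suff -> : pos w %% k < 2 = false by [].
    apply/negbTE; rewrite -leqNgt; lia.
  + have lc2 : l c = 2 by lia.
    have cm : c.+1 < m.
      rewrite ltn_neqAle ltn_ord andbT; apply/eqP => cm.
      have e1 := PS_step c; rewrite lc2 cm in e1.
      rewrite /nn in sk; lia.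
    pose c' : 'I_m := Ordinal cm.
    have asc : forall i j : 'I_m, i <= j -> l i <= l j.
      case: Hcase => [[_ a]|[_ [m3' _]]] //; have := cm; have := c1; lia.
    have lc' : 1 < l c' by rewrite -lc2; apply: asc; rewrite /=; lia.
    case: (ltnP (pos x).+2 (s + k)) => hp2.
    * pose w := Some (Tagged (fun i => 'I_(l i)) (Ordinal lc')).
      have c'0 : nat_of_ord c' != 0 by [].
      have [pw _] := pos_legS (Ordinal lc') c'0.
      rewrite -/w /= in pw.
      have ps : PS c.+1 = PS c + 2 by rewrite PS_step lc2.
      have bw : blk w = blk x by apply: blk_eq_of; rewrite pw -/s ps; lia.
      exists w; split=> //; apply: key_lt_same => //; right.
      have xw1 : xv1 w = false by rewrite /xv1 /= andbF.
      have xw2 : xv2 w by rewrite /xv2 /= andbT; lia.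
      rewrite clsx /cls xw1 xw2; split=> //.
      by rewrite pw px ps; lia.
    * exfalso.
      have := short_prefix asc lc3.
      have := PS_step c; rewrite lc2.
      case: Hcase => [[k5 _]|[k4 [m3' _]]]; last by have := cm; have := c1; lia.
      have := cm; move: px hp1 hp2 s_ge; lia.
- case: Hcase => [[k5 asc]|[k4 [m3' h2]]].
  + have c1' : (c.-1 < m) by have := ltn_ord c; lia.
    pose c' : 'I_m := Ordinal c1'.
    have lc' : (l c').-1 < l c' by have := lpos c'; lia.
    pose w := Some (Tagged (fun i => 'I_(l i)) (Ordinal lc')).
    have c'0 : nat_of_ord c' != 0 by rewrite /=; lia.
    have [pw _] := pos_legS (Ordinal lc') c'0.
      rewrite -/w /= in pw.
    have ps : PS c = PS c.-1 + l c'.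
      have := PS_step c'; rewrite /= => <-; congr PS; lia.
    have lpc := lpos c'.
    have bw : blk w = blk x by apply: blk_eq_of; rewrite pw -/s /=; lia.
    exists w; split=> //; apply: key_lt_same => //; left.
    rewrite clsx /cls.
    have nx : ~~ xv1 w && ~~ xv2 w.
      rewrite /xv1 /xv2 /=; case: (ltnP 1 c.-1) => c2 //=.
      case: (ltnP 2 (l c')) => l3; first by apply/andP; split; apply/eqP; lia.
      exfalso.
      have := short_prefix asc l3.
      have -> : (nat_of_ord c').+1 = c by rewrite /=; lia.
      move: px hp1 rx s_ge; have := ltn_ord c; lia.
    case/andP: nx => /negPf -> /negPf -> /=.
    have ow := offset w; rewrite bw -/s in ow.
    suff -> : pos w %% k < 2 = false by [].
    apply/negbTE; rewrite -leqNgt; lia.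
  + exfalso; move: h2.
    have c2 : nat_of_ord c = 2 by have := ltn_ord c; lia.
    have -> : PS 2 = PS c by rewrite c2.
    have -> : (PS c).+1 = s + 2 by lia.
    have : 4 %| s by rewrite /s k4 dvdn_mull.
    by move=> /dvdnP [q ->]; rewrite -modnDml modnMl.
Qed.


Lemma size_rm (r : seq nat) p : uniq r -> p \in r ->
  size [seq q <- r | q != p] = (size r).-1.
Proof.
move=> ur pr; rewrite size_filter.
have := count_predC (pred1 p) r; rewrite (count_uniq_mem _ ur) pr.
have -> : count (predC (pred1 p)) r = count (fun q => q != p) r by [].
move=> <-; rewrite add1n //.
Qed.

Lemma size_rm2 (r : seq nat) p w : uniq r -> p \in r -> w \in r -> w != p ->
  size [seq q <- r | (q != p) && (q != w)] = (size r).-2.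
Proof.
move=> ur pr wr wp.
have -> : [seq q <- r | (q != p) && (q != w)] = [seq q <- [seq q <- r | q != p] | q != w].
  by rewrite -filter_predI; apply: eq_filter => q /=; rewrite andbC.
rewrite size_rm ?size_rm //; first exact: filter_uniq.
by rewrite mem_filter wp.
Qed.

Definition Fset (x : V) : {set V} :=
  [set y | (key y < key x) && ((blk y == blk x) || graph_square (spider_edge m l) x y)].

Lemma F_cases x y : y \in Fset x ->
  (blk y = blk x /\ (cls y < cls x \/ (cls y = cls x /\ pos y < pos x))) \/
  (blk y < blk x /\ pos y \in Elist x).
Proof.
rewrite inE => /andP [kl /orP [/eqP b | ex]].
- have [H|H] := key_lt kl; [by move: H; rewrite b ltnn | by left].
- have [H|H] := key_lt kl; last by left.
  right; split=> //; apply: adj_E => //.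
  have := blk_lt_pos H; have := blk_range x; lia.
Qed.

Lemma F_neq x y : y \in Fset x -> y != x.
Proof. by rewrite inE => /andP [kl _]; apply/eqP => E; move: kl; rewrite E ltnn. Qed.

Lemma cls0 y : cls y = 0 -> xv1 y.
Proof. by rewrite /cls; case: ifP => //; case: ifP. Qed.

Lemma forb_card x : #|Fset x| < k.
Proof.
have rx := blk_range x; have ox := offset x.
set s := blk x * k in rx ox *.
case: (boolP (xv1 x)) => x1.
  apply: (@leq_ltn_trans (size (Elist x))); last first.
    by apply: leq_ltn_trans km; apply: size_Elist_xv1.
  apply: (card_sub_seq pos_inj) => y /[dup] yF /F_cases [[eb c]|[_ ->]] //.
  have clx : cls x = 0 by rewrite /cls x1.
  rewrite clx in c; case: c => [//|[/cls0 y1 pyx]].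
  have [i [i1 px ->]] := xv1_inv x1.
  have [i' [i1' py _]] := xv1_inv y1.
  rewrite !inE; apply/orP; right; apply/orP; right.
  rewrite py; apply: map_f; rewrite mem_iota.
  have : i' < i.
    rewrite ltnNge; apply/negP => ii'; have := PS_mono ii'; move: pyx; rewrite px py; lia.
  lia.
case: (boolP (xv2 x || (pos x %% k < 2))) => [c1|c2]; last first.
  move: c2; rewrite negb_or -leqNgt => /andP [x2 o2].
  apply: (@leq_ltn_trans (size [seq q <- iota s k | q != pos x])); last first.
    rewrite size_rm ?iota_uniq ?mem_iota ?size_iota; lia.
  apply: (card_sub_seq pos_inj) => y /[dup] yF /F_cases [[eb _]|[bl pE]].
  - rewrite mem_filter mem_iota; have := blk_range y; rewrite eb -/s.
    have := F_neq yF; rewrite -(inj_eq pos_inj); lia.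
  - exfalso; move: pE; rewrite Elist_plain // !inE; have := blk_lt_pos bl; rewrite -/s; lia.
have clx : cls x = 1 by rewrite /cls (negPf x1) c1.
case: (ltnP (pos x %% k) 2) => o2.
  have [a ea] := Elist_head x1.
  apply: (@leq_ltn_trans (size ([seq (PS r).+1 | r <- iota 2 (m - 2)] ++ Elist x))); last first.
    rewrite size_cat size_map size_iota ea /=; lia.
  apply: (card_sub_seq pos_inj) => y /[dup] yF /F_cases [[eb c]|[_ pE]]; last by rewrite mem_cat pE orbT.
  rewrite clx in c; case: c => [c|[c pyx]].
  - by rewrite mem_cat xv1_XV // cls0 //; lia.
  - rewrite mem_cat ea !inE; apply/orP; right; apply/orP; left; apply/eqP.
    have := blk_range y; rewrite eb -/s; lia.
have x2 : xv2 x by move: c1; rewrite ltnNge o2 orbF.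
have [i [i1 px ex]] := xv2_inv x2.
case: (ltnP l0 s) => ls; last first.
  apply: (@leq_ltn_trans (size [seq q <- iota s k | q != pos x])); last first.
    rewrite size_rm ?iota_uniq ?mem_iota ?size_iota; lia.
  apply: (card_sub_seq pos_inj) => y /[dup] yF /F_cases [[eb _]|[bl pE]].
  - rewrite mem_filter mem_iota; have := blk_range y; rewrite eb -/s.
    have := F_neq yF; rewrite -(inj_eq pos_inj); lia.
  - exfalso; move: pE; rewrite ex !inE; have := blk_lt_pos bl; rewrite -/s; lia.
case: (ltnP nn (s + k)) => sk.
  apply: (@leq_ltn_trans (size (l0 :: [seq q <- iota s (nn - s) | q != pos x]))); last first.
    rewrite /= size_rm ?iota_uniq ?mem_iota ?size_iota; have := pos_lt x; lia.
  apply: (card_sub_seq pos_inj) => y /[dup] yF /F_cases [[eb _]|[bl pE]].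
  - rewrite inE mem_filter mem_iota; have := blk_range y; rewrite eb -/s.
    have := pos_lt y; have := F_neq yF; rewrite -(inj_eq pos_inj); lia.
  - move: pE; rewrite ex !inE; have := blk_lt_pos bl; rewrite -/s; lia.
have [w [bw kw]] := witness x2 o2 ls sk.
have rw := blk_range w; rewrite bw -/s in rw.
apply: (@leq_ltn_trans (size (l0 :: [seq q <- iota s k | (q != pos x) && (q != pos w)]))); last first.
  have wx : pos w != pos x.
    by rewrite (inj_eq pos_inj); apply/eqP => E; move: kw; rewrite E ltnn.
  rewrite /= size_rm2 ?iota_uniq ?mem_iota ?size_iota //; lia.
apply: (card_sub_seq pos_inj) => y /[dup] yF /F_cases [[eb _]|[bl pE]].
- rewrite inE mem_filter mem_iota; have := blk_range y; rewrite eb -/s.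
  have := F_neq yF; rewrite -(inj_eq pos_inj) => ne.
  have nw : pos y != pos w.
    rewrite (inj_eq pos_inj); apply/eqP => E; move: yF; rewrite E inE => /andP [kk _].
    by move: (ltn_trans kk kw); rewrite ltnn.
  move: ne nw; lia.
- move: pE; rewrite ex !inE; have := blk_lt_pos bl; rewrite -/s; lia.
Qed.


Lemma sq_sym x y : graph_square (spider_edge m l) x y -> graph_square (spider_edge m l) y x.
Proof.
move=> /andP [xy H]; apply/andP; split; first by rewrite eq_sym.
case/orP: H => [E|/existsP [z /andP [a b]]].
- by rewrite /spider_edge orbC in E; rewrite /spider_edge E.
- apply/orP; right; apply/existsP; exists z; apply/andP; split.
  + by rewrite /spider_edge orbC.
  + by rewrite /spider_edge orbC.
Qed.

Lemma sq_irr x : ~~ graph_square (spider_edge m l) x x.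
Proof. by rewrite /graph_square eqxx. Qed.

Lemma construct : equitably_k_choosable (graph_square (spider_edge m l)) k.
Proof.
apply: (@greedy _ _ k key blk (ceil_div nn k)).
- exact: sq_sym.
- exact: sq_irr.
- exact: key_inj.
- exact: blk_bound.
- by rewrite card_V.
- exact: forb_card.
Qed.

End Spider.

Section Transfer.
Variables (m : nat) (l : 'I_m -> nat) (sg : 'I_m -> 'I_m) (k : nat).
Hypothesis sginj : injective sg.

Local Notation l' := (fun i => l (sg i)).

Definition phi (x : spider_vertex l') : spider_vertex l :=
  match x with
  | None => None
  | Some p => Some (Tagged (fun i => 'I_(l i)) (tagged p : 'I_(l (sg (tag p)))))
  end.

Lemma phi_inj : injective phi.
Proof.
move=> [[i j]|] [[i' j']|] //= [] E1 E2.
have E3 := congr1 (fun p : {x : 'I_m & 'I_(l x)} => nat_of_ord (tagged p)) E2.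
move: E3 => /=; have E := sginj E1; subst i' => E3.
by congr Some; congr existT; apply: val_inj.
Qed.

Lemma phi_edge a b : spider_edge m l (phi a) (phi b) = spider_edge m l' a b.
Proof.
by case: a => [[i j]|]; case: b => [[i' j']|];
  rewrite /spider_edge /spider_edge1 //= ?(inj_eq sginj).
Qed.

Lemma sum_sg : \sum_i l (sg i) = \sum_i l i.
Proof. by rewrite [RHS](reindex_inj sginj). Qed.

Lemma card_eq : #|{: spider_vertex l'}| = #|{: spider_vertex l}|.
Proof. by rewrite !card_V /nn !PS_m sum_sg. Qed.

Lemma transfer : equitably_k_choosable (graph_square (spider_edge m l')) k ->
  equitably_k_choosable (graph_square (spider_edge m l)) k.
Proof.
move=> H L HL.
have [g phiK gK] : bijective phi by apply: inj_card_bij phi_inj _; rewrite card_eq.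
have [f [fp fl fc]] := H (fun x => L (phi x)) (fun v => HL (phi v)).
exists (fun v => f (g v)); split.
- move=> x y exy; apply: fp.
  move: exy; rewrite -{1}(gK x) -{1}(gK y).
  move=> /andP [xy /orP [E|/existsP [z /andP [a b]]]]; apply/andP; split.
  + by apply: contraNneq xy => ->.
  + by rewrite -phi_edge E.
  + by apply: contraNneq xy => ->.
  + apply/orP; right; apply/existsP; exists (g z).
    by rewrite -!phi_edge !gK; rewrite !gK in a b; rewrite a b.
- by move=> v; rewrite -{2}(gK v); apply: fl.
- move=> c.
  have -> : [set v | f (g v) == c] = phi @: [set v | f v == c].
    apply/setP => v; rewrite inE; apply/idP/imsetP.
    + by move=> fc'; exists (g v); rewrite ?inE ?gK.
    + by move=> [v' v'in ->]; rewrite phiK; rewrite inE in v'in.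
  by rewrite card_imset ?card_eq' //; [rewrite -card_eq; apply: fc | apply: phi_inj].
Qed.

End Transfer.

Definition swap (m : nat) (c d : 'I_m) (i : 'I_m) : 'I_m :=
  if i == c then d else if i == d then c else i.

Lemma swapK (m : nat) (c d : 'I_m) : involutive (swap c d).
Proof.
move=> i; rewrite /swap.
case: (eqVneq i c) => [->|ic]; first by case: (eqVneq d c) => [->|dc]; rewrite ?eqxx // (negPf dc) eqxx.
case: (eqVneq i d) => [->|id]; first by rewrite eqxx.
by rewrite (negPf ic) (negPf id).
Qed.

Unset Implicit Arguments.

Theorem theorem2p1 (m : nat) (l : 'I_m -> nat) :
  3 <= m ->
  (forall i, 1 <= l i) ->
  (forall i j : 'I_m, i <= j -> l i <= l j) ->
  forall k, m.+1 <= k ->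
    equitably_k_choosable (graph_square (@spider_edge m l)) k.
Proof.
move=> m3 lpos asc k km.
have k0 : 0 < k by lia.
case: (ltnP 4 k) => k5.
  by apply: construct => //; left.
have k4 : k = 4 by lia.
have m3' : m = 3 by lia.
have o0 : 0 < m by lia. have o1 : 1 < m by lia. have o2 : 2 < m by lia.
pose i0 := Ordinal o0; pose i1 := Ordinal o1; pose i2 := Ordinal o2.
have tot (l1 : 'I_m -> nat) : PS l1 m = l1 i0 + l1 i1 + l1 i2.
  rewrite -(@PS_ge _ l1 3) ?m3' //.
  rewrite (PS_step l1 i2) (PS_step l1 i1) (PS_step l1 i0) PS0 /=; lia.
have [c hc] : exists c : 'I_m, ((PS l m).+1 - l c) %% 4 != 2.
  case: (eqVneq (((PS l m).+1 - l i0) %% 4) 2) => h0; last by exists i0.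
  case: (eqVneq (((PS l m).+1 - l i1) %% 4) 2) => h1; last by exists i1.
  case: (eqVneq (((PS l m).+1 - l i2) %% 4) 2) => h2; last by exists i2.
  exfalso; move: h0 h1 h2; rewrite tot; lia.
have sinj : injective (swap c i2) by apply: inv_inj; apply: swapK.
apply: (transfer sinj).
apply: construct => //; try (by move=> i; apply: lpos).
  right; split=> //; split=> //.
  have e1 : PS (fun i => l (swap c i2 i)) m = PS l m by rewrite !PS_m sum_sg.
  have e2 : l (swap c i2 i2) = l c.
    rewrite /swap; case: (eqVneq i2 c) => [->|ne] //; by rewrite eqxx.
  move: hc; rewrite -e1 tot -e2.
  have -> : PS (fun i => l (swap c i2 i)) 2 =
    l (swap c i2 i0) + l (swap c i2 i1).
    by rewrite (PS_step _ i1) (PS_step _ i0) PS0.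
  have -> : (l (swap c i2 i0) + l (swap c i2 i1) + l (swap c i2 i2)).+1 -
     l (swap c i2 i2) = (l (swap c i2 i0) + l (swap c i2 i1)).+1 by lia.
  by [].
Qed.
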